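(* Let $X$ and $Y$ be independent nonnegative random variables with distributions $F$ and $G$, where $F$ has unbounded support, and let $H$ be the distribution of $XY$. If $G^{*k}\in\mathcal L$ for some integer $k\ge1$, then for every constant $d>0$, $$\overline G(x/d)-\overline G\big((x+1)/d\big)=o\big(\overline H(x)\big)\quad\text{as }x\to\infty.$$
   Context: For a distribution $V$, $\overline V=1-V$ denotes its tail, and $V^{*k}$ denotes the $k$-fold convolution of $V$ with itself (the distribution of the sum of $k$ independent copies). All limits are as $x\to\infty$; $f(x)\sim g(x)$ means $f(x)/g(x)\to1$ and $f(x)=o(g(x))$ means $f(x)/g(x)\to0$. A distribution $V$ is long-tailed, written $V\in\mathcal L$, if $\overline V(x)>0$ for all $x$ and $\overline V(x-t)\sim\overline V(x)$ for every real $t$. *)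

(* Defs.v *)
From Stdlib Require Import Reals Lra.
Open Scope R_scope.

Record ProbSpace := {
  Omega : Type;
  is_event : (Omega -> Prop) -> Prop;
  prob : (Omega -> Prop) -> R;
  ev_full : is_event (fun _ => True);
  ev_compl : forall A, is_event A -> is_event (fun w => ~ A w);
  ev_union : forall A : nat -> Omega -> Prop,
      (forall n, is_event (A n)) -> is_event (fun w => exists n, A n w);
  prob_nonneg : forall A, is_event A -> 0 <= prob A;
  prob_full : prob (fun _ => True) = 1;
  prob_sigma : forall A : nat -> Omega -> Prop,
      (forall n, is_event (A n)) ->
      (forall m n w, m <> n -> A m w -> A n w -> False) ->
      infinite_sum (fun n => prob (A n)) (prob (fun w => exists n, A n w))
}.

Definition random_var (Ps : ProbSpace) (X : Omega Ps -> R) : Prop :=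
  forall x, is_event Ps (fun w => X w <= x).

Definition cdf (Ps : ProbSpace) (X : Omega Ps -> R) : R -> R :=
  fun x => prob Ps (fun w => X w <= x).

Definition tail (V : R -> R) : R -> R := fun x => 1 - V x.

Fixpoint sumR (f : nat -> R) (n : nat) : R :=
  match n with O => 0 | S m => sumR f m + f m end.
Fixpoint prodR (f : nat -> R) (n : nat) : R :=
  match n with O => 1 | S m => prodR f m * f m end.

Definition indep2 (Ps : ProbSpace) (X Y : Omega Ps -> R) : Prop :=
  forall a b, prob Ps (fun w => X w <= a /\ Y w <= b)
              = prob Ps (fun w => X w <= a) * prob Ps (fun w => Y w <= b).

Definition indep_fam (Ps : ProbSpace) (Y : nat -> Omega Ps -> R) (k : nat) : Prop :=
  forall a : nat -> R,
    prob Ps (fun w => forall i, (i < k)%nat -> Y i w <= a i)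
    = prodR (fun i => prob Ps (fun w => Y i w <= a i)) k.

Definition conv_power (G : R -> R) (k : nat) (V : R -> R) : Prop :=
  exists (Ps : ProbSpace) (Y : nat -> Omega Ps -> R),
    (forall i, (i < k)%nat -> random_var Ps (Y i)) /\
    (forall i, (i < k)%nat -> cdf Ps (Y i) = G) /\
    indep_fam Ps Y k /\
    cdf Ps (fun w => sumR (fun i => Y i w) k) = V.

Definition asymp_equiv (f g : R -> R) : Prop :=
  forall eps, eps > 0 -> exists M, forall x, x >= M -> Rabs (f x / g x - 1) < eps.

Definition little_o (f g : R -> R) : Prop :=
  forall eps, eps > 0 -> exists M, forall x, x >= M -> Rabs (f x / g x) < eps.

Definition long_tailed (V : R -> R) : Prop :=
  (forall x, tail V x > 0) /\
  (forall t, asymp_equiv (fun x => tail V (x - t)) (tail V)).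

(* Main.v *)
Require Import Defs.
From Stdlib Require Import Reals Lra Lia Classical FunctionalExtensionality PropExtensionality.
Open Scope R_scope.

Lemma pred_ext {T} (A B : T -> Prop) : (forall w, A w <-> B w) -> A = B.
Proof. intros H; apply functional_extensionality; intro w; apply propositional_extensionality; auto. Qed.

Lemma ev_ext P (A B : Omega P -> Prop) : (forall w, A w <-> B w) -> is_event P A -> is_event P B.
Proof. intros H; rewrite (pred_ext A B H); auto. Qed.

Lemma prob_ext P (A B : Omega P -> Prop) : (forall w, A w <-> B w) -> prob P A = prob P B.
Proof. intros H; rewrite (pred_ext A B H); auto. Qed.

Lemma ev_empty P : is_event P (fun _ => False).
Proof. eapply ev_ext; [|apply ev_compl, ev_full]. intros; simpl; tauto. Qed.

Lemma ev_or P A B : is_event P A -> is_event P B -> is_event P (fun w => A w \/ B w).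
Proof.
  intros HA HB.
  eapply ev_ext; [| apply (ev_union P (fun n => match n with O => A | _ => B end))].
  - intros w; split.
    + intros [n Hn]; destruct n; tauto.
    + intros [H|H]; [exists O | exists 1%nat]; auto.
  - intros [|n]; auto.
Qed.

Lemma ev_and P A B : is_event P A -> is_event P B -> is_event P (fun w => A w /\ B w).
Proof.
  intros HA HB.
  apply (ev_ext P (fun w => ~ (~ A w \/ ~ B w))).
  - intros w; split; [intros H; split; apply NNPP; tauto | tauto].
  - apply ev_compl, ev_or; apply ev_compl; auto.
Qed.

Lemma const_sum0 c l : infinite_sum (fun _ => c) l -> c = 0.
Proof.
  intros H.
  destruct (Req_dec c 0) as [|Hc]; auto.
  assert (Hp : Rabs c / 4 > 0) by (apply Rabs_no_R0 in Hc; pose proof (Rabs_pos c); lra).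
  destruct (H _ Hp) as [N HN].
  pose proof (HN N (le_n N)) as H1. pose proof (HN (S N) (le_S _ _ (le_n N))) as H2.
  unfold R_dist in *. rewrite !sum_cte in *.
  rewrite !S_INR in H1, H2. rewrite ?S_INR in H2.
  set (u := c * (INR N + 1 + 1) - l) in *. set (v := c * (INR N + 1) - l) in *.
  assert (Rabs c = Rabs (u + - v)) by (f_equal; unfold u, v; ring).
  pose proof (Rabs_triang u (- v)).
  rewrite Rabs_Ropp in H3. exfalso; lra.
Qed.

Lemma prob_empty P : prob P (fun _ => False) = 0.
Proof.
  pose proof (prob_sigma P (fun _ => fun _ => False)) as H.
  assert (E : prob P (fun w => exists n : nat, False) = prob P (fun _ => False)).
  { apply prob_ext; intros; split; [intros [_ []]|tauto]. }
  cbv beta in H. rewrite E in H. eapply const_sum0; apply H.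
  - intros; apply ev_empty.
  - tauto.
Qed.

Lemma prob_add P A B : is_event P A -> is_event P B -> (forall w, A w -> B w -> False) ->
  prob P (fun w => A w \/ B w) = prob P A + prob P B.
Proof.
  intros HA HB D.
  set (s := fun n => match n with O => A | 1%nat => B | _ => fun _ : Omega P => False end).
  pose proof (prob_sigma P s) as H.
  assert (E : prob P (fun w => exists n, s n w) = prob P (fun w => A w \/ B w)).
  { apply prob_ext; intros w; split.
    - intros [[|[|n]] Hn]; simpl in Hn; tauto.
    - intros [h|h]; [exists O|exists 1%nat]; auto. }
  rewrite E in H. eapply uniqueness_sum; [apply H|].
  - intros [|[|n]]; simpl; auto using ev_empty.
  - intros [|[|m]] [|[|n]] w; simpl; try tauto; intros; try lia; eauto.
  - intros eps Heps; exists 1%nat; intros n Hn.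
    assert (forall m, sum_f_R0 (fun n => prob P (s n)) (S m) = prob P A + prob P B).
    { induction m. simpl; ring. rewrite tech5, IHm. simpl. rewrite prob_empty. ring. }
    destruct n; [lia|]. rewrite H0. unfold R_dist. rewrite Rminus_diag, Rabs_R0. lra.
Qed.

Lemma prob_compl P A : is_event P A -> prob P (fun w => ~ A w) = 1 - prob P A.
Proof.
  intros HA. rewrite <- (prob_full P).
  rewrite (prob_ext P (fun _ => True) (fun w => A w \/ ~ A w)) by (intros w; tauto).
  rewrite prob_add; auto using ev_compl. ring.
Qed.

Lemma prob_diff P A B : is_event P A -> is_event P B -> (forall w, A w -> B w) ->
  prob P (fun w => B w /\ ~ A w) = prob P B - prob P A.
Proof.
  intros HA HB S.
  assert (E : prob P B = prob P (fun w => A w \/ (B w /\ ~ A w))).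
  { apply prob_ext; intros w; split; [intros; tauto| intros [h|h]; auto; tauto]. }
  rewrite E, prob_add; auto using ev_and, ev_compl. ring. tauto.
Qed.

Lemma prob_mono P A B : is_event P A -> is_event P B -> (forall w, A w -> B w) -> prob P A <= prob P B.
Proof.
  intros HA HB S. pose proof (prob_diff P A B HA HB S).
  pose proof (prob_nonneg P _ (ev_and P _ _ HB (ev_compl P _ HA))). lra.
Qed.

Lemma prob_le1 P A : is_event P A -> prob P A <= 1.
Proof. intros; rewrite <- (prob_full P); apply prob_mono; auto using ev_full. Qed.

Lemma prob_union_le P A B : is_event P A -> is_event P B ->
  prob P (fun w => A w \/ B w) <= prob P A + prob P B.
Proof.
  intros HA HB.
  rewrite (prob_ext P _ (fun w => A w \/ (B w /\ ~ A w))) by (intros; tauto).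
  rewrite prob_add; auto using ev_and, ev_compl; [|tauto].
  pose proof (prob_mono P (fun w => B w /\ ~ A w) B (ev_and P _ _ HB (ev_compl P _ HA)) HB (fun w h => proj1 h)). lra.
Qed.

Lemma inv_small e : e > 0 -> exists n : nat, / (INR n + 1) < e.
Proof.
  intros He. destruct (archimed_cor1 e He) as [N [H1 H2]].
  exists N. eapply Rle_lt_trans; [|apply H1].
  apply Rinv_le_contravar. apply lt_0_INR; lia. lra.
Qed.

Lemma rv_ext P (f g : Omega P -> R) : (forall w, f w = g w) -> random_var P f -> random_var P g.
Proof. intros H Hf x. apply (ev_ext P (fun w => f w <= x)); [intros w; rewrite H; tauto | apply Hf]. Qed.

Lemma rv_lt P Z c : random_var P Z -> is_event P (fun w => Z w < c).
Proof.
  intros HZ.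
  apply (ev_ext P (fun w => exists n : nat, Z w <= c - / (INR n + 1))).
  - intros w; split.
    + intros [n Hn]. assert (/ (INR n + 1) > 0) by (apply Rinv_0_lt_compat; pose proof (pos_INR n); lra). lra.
    + intros H. destruct (inv_small (c - Z w)) as [n Hn]; [lra|]. exists n; lra.
  - apply ev_union; intros; apply HZ.
Qed.

Lemma rv_gt P Z c : random_var P Z -> is_event P (fun w => Z w > c).
Proof.
  intros HZ. apply (ev_ext P (fun w => ~ Z w <= c)). intros; lra. apply ev_compl, HZ.
Qed.

Lemma rv_ge P Z c : random_var P Z -> is_event P (fun w => Z w >= c).
Proof.
  intros HZ. apply (ev_ext P (fun w => ~ Z w < c)). intros; lra. apply ev_compl, rv_lt, HZ.
Qed.

Lemma rv_const P r : random_var P (fun _ => r).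
Proof.
  intros x. destruct (Rle_dec r x).
  - eapply ev_ext; [|apply ev_full]. intros; simpl; split; auto.
  - eapply ev_ext; [|apply ev_empty]. intros; simpl; split; tauto.
Qed.

Lemma rv_neg P Z : random_var P Z -> random_var P (fun w => - Z w).
Proof.
  intros HZ x. apply (ev_ext P (fun w => Z w >= - x)). intros; lra. apply rv_ge, HZ.
Qed.

Lemma rv_scale P Z r : r > 0 -> random_var P Z -> random_var P (fun w => Z w * r).
Proof.
  intros Hr HZ x. apply (ev_ext P (fun w => Z w <= x / r)).
  - intros w. split; intros H.
    + apply (Rmult_le_compat_r r) in H; [|lra]. unfold Rdiv in H. rewrite Rmult_assoc, Rinv_l in H; lra.
    + apply (Rmult_le_reg_r r); [lra|]. unfold Rdiv. rewrite Rmult_assoc, Rinv_l; lra.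
  - apply HZ.
Qed.

Lemma density a b : a < b -> exists n m j : nat, a < (INR m - INR j) / (INR n + 1) < b.
Proof.
  intros Hab. destruct (inv_small (b - a)) as [n Hn]; [lra|].
  set (N := INR n + 1). assert (HN : N > 0) by (unfold N; pose proof (pos_INR n); lra).
  assert (H1 : 1 < (b - a) * N).
  { apply (Rmult_lt_compat_r N) in Hn; auto. rewrite Rinv_l in Hn; lra. }
  set (p := up (a * N)). destruct (archimed (a * N)) as [A1 A2].
  exists n, (Z.to_nat p), (Z.to_nat (- p)).
  assert (E : INR (Z.to_nat p) - INR (Z.to_nat (- p)) = IZR p).
  { rewrite !INR_IZR_INZ, <- minus_IZR. f_equal. lia. }
  rewrite E. fold N. fold p in A1, A2. split.
  - apply (Rmult_lt_reg_r N); auto. unfold Rdiv. rewrite Rmult_assoc, Rinv_l; lra.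
  - apply (Rmult_lt_reg_r N); auto. unfold Rdiv. rewrite Rmult_assoc, Rinv_l; lra.
Qed.

Lemma rv_plus P Z1 Z2 : random_var P Z1 -> random_var P Z2 -> random_var P (fun w => Z1 w + Z2 w).
Proof.
  intros H1 H2 c.
  apply (ev_ext P (fun w => ~ exists n m j : nat,
     Z1 w > (INR m - INR j) / (INR n + 1) /\ Z2 w > c - (INR m - INR j) / (INR n + 1))).
  - intros w; split.
    + intros H. apply Rnot_lt_le. intros Hc. apply H.
      destruct (density (c - Z2 w) (Z1 w)) as [n [m [j Hq]]]; [lra|].
      exists n, m, j; lra.
    + intros H [n [m [j Hq]]]. lra.
  - apply ev_compl. do 3 (apply ev_union; intros).
    apply ev_and; apply rv_gt; auto.
Qed.

Lemma rv_sq P Z : random_var P Z -> random_var P (fun w => Z w * Z w).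
Proof.
  intros HZ c. destruct (Rlt_dec c 0).
  - eapply ev_ext; [|apply ev_empty]. intros w; simpl; split; [tauto|]. intros. nra.
  - apply (ev_ext P (fun w => Z w <= sqrt c /\ - Z w <= sqrt c)).
    + intros w. pose proof (sqrt_sqrt c) as S. pose proof (sqrt_pos c). split.
      * intros [A B]. assert (0 <= (sqrt c - Z w) * (sqrt c + Z w)) by (apply Rmult_le_pos; lra).
        nra.
      * intros A. assert (Rabs (Z w) <= sqrt c).
        { rewrite <- sqrt_Rsqr_abs. apply sqrt_le_1_alt. unfold Rsqr. auto. }
        revert H0; unfold Rabs; destruct (Rcase_abs (Z w)); lra.
    + apply ev_and; [apply HZ| apply rv_neg, HZ].
Qed.

Lemma rv_mult P Z1 Z2 : random_var P Z1 -> random_var P Z2 -> random_var P (fun w => Z1 w * Z2 w).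
Proof.
  intros H1 H2.
  apply (rv_ext P (fun w => ((Z1 w + Z2 w) * (Z1 w + Z2 w) + - ((Z1 w + - Z2 w) * (Z1 w + - Z2 w))) * / 4)).
  - intros; field.
  - apply rv_scale; [lra|]. apply rv_plus.
    + apply rv_sq, rv_plus; auto.
    + apply rv_neg, rv_sq, rv_plus; auto. apply rv_neg; auto.
Qed.

Lemma rv_sumR P (Y : nat -> Omega P -> R) k :
  (forall i, (i < k)%nat -> random_var P (Y i)) -> random_var P (fun w => sumR (fun i => Y i w) k).
Proof.
  induction k; intros H; simpl.
  - apply rv_const.
  - apply rv_plus; auto.
Qed.

Lemma ev_finunion P (A : nat -> Omega P -> Prop) m :
  (forall i, (i < m)%nat -> is_event P (A i)) ->
  is_event P (fun w => exists i, (i < m)%nat /\ A i w) /\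
  prob P (fun w => exists i, (i < m)%nat /\ A i w) <= sumR (fun i => prob P (A i)) m.
Proof.
  induction m; intros H.
  - assert (E: forall w, (exists i, (i < 0)%nat /\ A i w) <-> False) by (intros w; split; [intros [i [Hi _]]; lia|tauto]).
    split. eapply ev_ext; [intros w; symmetry; apply E| apply ev_empty].
    rewrite (prob_ext P _ _ E), prob_empty. simpl; lra.
  - destruct IHm as [IH1 IH2]; [intros; apply H; lia|].
    assert (E: forall w, (exists i, (i < S m)%nat /\ A i w) <-> ((exists i, (i < m)%nat /\ A i w) \/ A m w)).
    { intros w; split.
      - intros [i [Hi Ai]]. destruct (Nat.eq_dec i m); [subst; auto|left; exists i; split; auto; lia].
      - intros [[i [Hi Ai]]|Am]; [exists i; split; auto; lia| exists m; split; auto]. }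
    assert (Hm: is_event P (A m)) by (apply H; lia).
    split. eapply ev_ext; [intros w; symmetry; apply E| apply ev_or; auto].
    rewrite (prob_ext P _ _ E). simpl.
    pose proof (prob_union_le P _ _ IH1 Hm). lra.
Qed.

Lemma ev_finint P (A : nat -> Omega P -> Prop) m :
  (forall i, (i < m)%nat -> is_event P (A i)) ->
  is_event P (fun w => forall i, (i < m)%nat -> A i w).
Proof.
  intros H. apply (ev_ext P (fun w => ~ exists i, (i < m)%nat /\ ~ A i w)).
  - intros w; split.
    + intros H1 i Hi. apply NNPP. intros H2. apply H1. eauto.
    + intros H1 [i [Hi H2]]. auto.
  - apply ev_compl. apply ev_finunion. intros; apply ev_compl; auto.
Qed.

Lemma sumR_ext f g m : (forall i, (i < m)%nat -> f i = g i) -> sumR f m = sumR g m.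
Proof. induction m; intros H; simpl; auto. rewrite IHm, H; auto. Qed.

Lemma prodR_ext f g m : (forall i, (i < m)%nat -> f i = g i) -> prodR f m = prodR g m.
Proof. induction m; intros H; simpl; auto. rewrite IHm, H; auto. Qed.

Lemma sumR_const c m : sumR (fun _ => c) m = INR m * c.
Proof. induction m; simpl sumR; [simpl; ring|]. rewrite IHm, S_INR; ring. Qed.

Lemma prodR_const c m : prodR (fun _ => c) m = c ^ m.
Proof. induction m; simpl; auto. rewrite IHm; ring. Qed.

Lemma sumR_S g m : sumR g (S m) = g O + sumR (fun i => g (S i)) m.
Proof. induction m; simpl in *; [ring|]. rewrite IHm. ring. Qed.

Lemma prodR_S g m : prodR g (S m) = g O * prodR (fun i => g (S i)) m.
Proof. induction m; simpl in *; [ring|]. rewrite IHm. ring. Qed.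

Lemma sumR_up g m hi : (forall i, (i < m)%nat -> g i <= hi) -> sumR g m <= INR m * hi.
Proof.
  intros H. rewrite <- sumR_const. induction m; simpl; [lra|].
  pose proof (H m ltac:(lia)). assert (sumR g m <= sumR (fun _ => hi) m) by (apply IHm; intros; apply H; lia). lra.
Qed.

Lemma sumR_lo g m lo : (forall i, (i < m)%nat -> lo <= g i) -> INR m * lo <= sumR g m.
Proof.
  intros H. rewrite <- sumR_const. induction m; simpl; [lra|].
  pose proof (H m ltac:(lia)). assert (sumR (fun _ => lo) m <= sumR g m) by (apply IHm; intros; apply H; lia). lra.
Qed.

Lemma cdf_pos_somewhere P Z : random_var P Z -> exists n : nat, cdf P Z (INR n) > 0.
Proof.
  intros HZ. apply NNPP. intros Hn.
  assert (H0 : forall n, prob P (fun w => Z w <= INR n) = 0).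
  { intros n. pose proof (prob_nonneg P _ (HZ (INR n))). unfold cdf in Hn.
    destruct (Rle_lt_or_eq_dec _ _ H); auto. exfalso; apply Hn; exists n; lra. }
  set (s := fun n => match n with O => fun w => Z w <= 0
                     | S m => fun w => Z w <= INR (S m) /\ ~ Z w <= INR m end).
  assert (Hs : forall n, is_event P (s n)).
  { intros [|m]; simpl. apply HZ. apply ev_and; [apply HZ| apply ev_compl, HZ]. }
  assert (Hs0 : forall n, prob P (s n) = 0).
  { intros n. pose proof (prob_nonneg P _ (Hs n)).
    assert (prob P (s n) <= prob P (fun w => Z w <= INR n)).
    { apply prob_mono; auto. destruct n; simpl; [intros; simpl; lra| tauto]. }
    rewrite H0 in H1; lra. }
  assert (Hd : forall m n w, (m < n)%nat -> s m w -> s n w -> False).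
  { intros m n w Hmn. destruct n as [|n]; [lia|]. destruct m as [|m]; cbv beta iota delta [s].
    - intros A [B C]. pose proof (pos_INR n). lra.
    - intros [A _] [_ C]. apply C. eapply Rle_trans; [apply A| apply le_INR; lia]. }
  assert (Hc : forall w, exists n, s n w).
  { intros w. destruct (INR_archimed 1 (Z w)) as [N HN]; [lra|].
    assert (Z w <= INR N) by lra. clear HN. induction N.
    - exists O; simpl; auto.
    - destruct (Rle_dec (Z w) (INR N)); auto. exists (S N); simpl; split; auto. }
  pose proof (prob_sigma P s Hs) as HS.
  assert (HS' : infinite_sum (fun n => prob P (s n)) (prob P (fun w => exists n, s n w))).
  { apply HS. intros m n w Hmn A B. destruct (Nat.lt_gt_cases m n) as [[h|h] _]; auto; eauto. }
  rewrite (prob_ext P _ (fun _ => True)) in HS' by (intros; split; auto).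
  rewrite prob_full in HS'.
  assert (infinite_sum (fun n => prob P (s n)) 0).
  { intros eps Heps; exists O; intros n _. unfold R_dist.
    replace (sum_f_R0 (fun n => prob P (s n)) n) with 0. rewrite Rminus_diag, Rabs_R0; lra.
    rewrite (sum_eq _ (fun _ => 0)). rewrite sum_cte. ring. intros; auto. }
  pose proof (uniqueness_sum _ _ _ HS' H). lra.
Qed.

Lemma ratio_bounds f g e : g > 0 -> Rabs (f / g - 1) < e -> (1 - e) * g < f < (1 + e) * g.
Proof.
  intros Hg H. apply Rabs_def2 in H. destruct H as [H1 H2].
  assert (f = (f / g) * g) by (field; lra).
  split; rewrite H; apply Rmult_lt_compat_r; lra.
Qed.

Lemma conv_facts (Ps' : ProbSpace) (Y' : nat -> Omega Ps' -> R) (G V : R -> R) k b h :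
  (forall i, (i < S k)%nat -> random_var Ps' (Y' i)) ->
  (forall i, (i < S k)%nat -> cdf Ps' (Y' i) = G) ->
  indep_fam Ps' Y' (S k) ->
  cdf Ps' (fun w => sumR (fun i => Y' i w) (S k)) = V ->
  G (-1) = 0 -> 0 <= b -> 0 <= h ->
  (forall y, tail V y <= INR (S k) * tail G (y / INR (S k))) /\
  (forall y, (G (y + h) - G y) * G b ^ k <= tail V (y - INR (S k)) - tail V (y + (h + INR (S k) * b))).
Proof.
  intros Hrv Hcdf Hind HV Gm1 Hb Hh.
  set (Sm := fun w => sumR (fun i => Y' i w) (S k)).
  assert (HS : random_var Ps' Sm) by (apply rv_sumR; auto).
  assert (HVz : forall z, V z = prob Ps' (fun w => Sm w <= z)) by (intros; rewrite <- HV; reflexivity).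
  assert (HG : forall i z, (i < Datatypes.S k)%nat -> prob Ps' (fun w => Y' i w <= z) = G z).
  { intros i z Hi. rewrite <- (Hcdf i Hi). reflexivity. }
  assert (Hkpos : INR (Datatypes.S k) > 0) by (apply lt_0_INR; lia).
  split.
  - intros y. unfold tail. rewrite HVz, <- prob_compl by apply HS.
    destruct (ev_finunion Ps' (fun i w => ~ Y' i w <= y / INR (Datatypes.S k)) (Datatypes.S k)) as [E1 E2].
    { intros; apply ev_compl, Hrv; auto. }
    eapply Rle_trans; [apply prob_mono; [apply ev_compl, HS| apply E1|]|].
    + intros w Hw. apply NNPP. intros Hn. apply Hw.
      assert (Sm w <= INR (Datatypes.S k) * (y / INR (Datatypes.S k))).
      { apply sumR_up. intros i Hi. apply NNPP. intros Hc. apply Hn. exists i; split; auto. }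
      replace y with (INR (Datatypes.S k) * (y / INR (Datatypes.S k))) by (field; lra). auto.
    + eapply Rle_trans; [apply E2|]. rewrite <- sumR_const. apply Req_le, sumR_ext.
      intros i Hi. rewrite prob_compl by (apply Hrv; auto). rewrite HG; auto.
  - intros y.
    set (av := fun (u : R) (i : nat) => match i with O => u | Datatypes.S _ => b end).
    set (Pu := fun u w => forall i, (i < Datatypes.S k)%nat -> Y' i w <= av u i).
    assert (HPu : forall u, is_event Ps' (Pu u)) by (intros u; apply ev_finint; intros i Hi; apply Hrv; auto).
    assert (pPu : forall u, prob Ps' (Pu u) = G u * G b ^ k).
    { intros u. unfold Pu. rewrite (Hind (av u)).
      rewrite (prodR_ext _ (fun i => G (av u i))) by (intros; apply HG; auto).
      rewrite prodR_S. simpl (av u O). rewrite (prodR_ext _ (fun _ => G b)) by (intros; reflexivity).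
      rewrite prodR_const. reflexivity. }
    set (E := fun w => Pu (y + h) w /\ ~ Pu y w).
    assert (pE : prob Ps' E = (G (y + h) - G y) * G b ^ k).
    { unfold E. rewrite prob_diff; auto. rewrite !pPu; ring.
      intros w Hw i Hi. specialize (Hw i Hi). destruct i; simpl in *; lra. }
    set (Nn := fun w => exists i, (i < Datatypes.S k)%nat /\ Y' i w <= -1).
    destruct (ev_finunion Ps' (fun i w => Y' i w <= -1) (Datatypes.S k)) as [N1 N2].
    { intros; apply Hrv; auto. }
    assert (pN : prob Ps' Nn <= 0).
    { eapply Rle_trans; [apply N2|]. rewrite (sumR_ext _ (fun _ => 0)).
      - rewrite sumR_const; lra.
      - intros i Hi. cbv beta. rewrite HG; auto. }
    set (s := h + INR (Datatypes.S k) * b).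
    set (W := fun w => Sm w <= y + s /\ ~ Sm w <= y - INR (Datatypes.S k)).
    assert (Hs : 0 <= s) by (unfold s; pose proof (pos_INR (Datatypes.S k)); nra).
    assert (pW : prob Ps' W = V (y + s) - V (y - INR (Datatypes.S k))).
    { unfold W. rewrite prob_diff; auto. rewrite !HVz; auto. intros w Hw; lra. }
    assert (Hsub : forall w, E w -> W w \/ Nn w).
    { intros w [H1 H2]. destruct (classic (Nn w)) as [|Hn]; auto. left.
      assert (Hlo : forall i, (i < Datatypes.S k)%nat -> Y' i w > -1).
      { intros i Hi. apply Rnot_le_gt. intros Hc. apply Hn. exists i; auto. }
      assert (H0 : Y' O w > y).
      { apply Rnot_le_gt. intros Hc. apply H2. intros [|i] Hi; simpl; auto. }
      assert (H0' : Y' O w <= y + h) by (apply (H1 O); lia).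
      unfold W, Sm. rewrite sumR_S.
      pose proof (sumR_up (fun i => Y' (Datatypes.S i) w) k b ltac:(intros i Hi; apply (H1 (Datatypes.S i)); lia)).
      pose proof (sumR_lo (fun i => Y' (Datatypes.S i) w) k (-1) ltac:(intros i Hi; pose proof (Hlo (Datatypes.S i) ltac:(lia)); lra)).
      rewrite S_INR in *. unfold s. rewrite S_INR. pose proof (pos_INR k). split; nra. }
    assert (HW : is_event Ps' W) by (apply ev_and; [apply HS|apply ev_compl, HS]).
    assert (HE : is_event Ps' E) by (apply ev_and; auto; apply ev_compl; auto).
    rewrite <- pE. unfold tail.
    pose proof (prob_mono Ps' E (fun w => W w \/ Nn w) HE (ev_or _ _ _ HW N1) Hsub).
    pose proof (prob_union_le Ps' W Nn HW N1). rewrite pW in H0. lra.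
Qed.

Lemma prod_tail (Ps : ProbSpace) (X Y : Omega Ps -> R) a x :
  random_var Ps X -> random_var Ps Y -> indep2 Ps X Y -> a > 0 -> x > 0 ->
  tail (cdf Ps (fun w => X w * Y w)) x >= tail (cdf Ps X) a * tail (cdf Ps Y) (x / a).
Proof.
  intros HX HY Hind Ha Hx. unfold tail, cdf.
  set (A := fun w => X w <= a). set (B := fun w => Y w <= x / a).
  assert (HA : is_event Ps A) by apply HX. assert (HB : is_event Ps B) by apply HY.
  assert (HAB : is_event Ps (fun w => A w /\ B w)) by (apply ev_and; auto).
  assert (p1 : prob Ps (fun w => B w /\ ~ A w) = prob Ps B - prob Ps A * prob Ps B).
  { replace (prob Ps A * prob Ps B) with (prob Ps (fun w => A w /\ B w)) by exact (Hind a (x / a)).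
    rewrite <- (prob_diff Ps (fun w => A w /\ B w) B); auto; [|tauto].
    apply prob_ext; intros; tauto. }
  assert (p2 : prob Ps (fun w => A w \/ B w) = prob Ps A + prob Ps B - prob Ps A * prob Ps B).
  { rewrite (prob_ext Ps _ (fun w => A w \/ (B w /\ ~ A w))) by (intros; tauto).
    rewrite prob_add; auto. lra. apply ev_and; auto; apply ev_compl; auto. tauto. }
  assert (HXY : is_event Ps (fun w => X w * Y w <= x)) by (apply rv_mult; auto).
  rewrite <- prob_compl by auto.
  assert (prob Ps (fun w => ~ (A w \/ B w)) <= prob Ps (fun w => ~ X w * Y w <= x)).
  { apply prob_mono; try apply ev_compl; auto using ev_or.
    intros w Hw. unfold A, B in Hw.
    assert (X w > a /\ Y w > x / a) by lra.
    assert (x / a > 0) by (apply Rdiv_lt_0_compat; lra).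
    assert (a * (x / a) < X w * Y w) by (apply Rmult_le_0_lt_compat; lra).
    replace (a * (x / a)) with x in H1 by (field; lra). lra. }
  rewrite prob_compl in H by (apply ev_or; auto). rewrite p2 in H.
  fold A B. lra.
Qed.

Theorem mainTheorem5 :
  forall (Ps : ProbSpace) (X Y : Omega Ps -> R),
    random_var Ps X -> random_var Ps Y ->
    indep2 Ps X Y ->
    (* X, Y nonnegative *)
    (forall x, x < 0 -> cdf Ps X x = 0) ->
    (forall x, x < 0 -> cdf Ps Y x = 0) ->
    (* F has unbounded support *)
    (forall x, tail (cdf Ps X) x > 0) ->
    forall k : nat, (1 <= k)%nat ->
    (exists V, conv_power (cdf Ps Y) k V /\ long_tailed V) ->
    forall d : R, d > 0 ->
      little_o
        (fun x => tail (cdf Ps Y) (x / d) - tail (cdf Ps Y) ((x + 1) / d))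
        (tail (cdf Ps (fun w => X w * Y w))).
Proof.
  intros Ps X Y HX HY Hind HX0 HY0 HXu k Hk [V [[Ps' [Y' [Hrv [Hcdf [Hind' HV]]]]] [Vpos Vlt]]] d Hd.
  destruct k as [|k]; [lia|].
  set (G := cdf Ps Y) in *.
  destruct (cdf_pos_somewhere Ps Y HY) as [n Hn]. fold G in Hn.
  set (b := INR n).
  assert (Hc : G b ^ k > 0) by (apply pow_lt; auto).
  set (h := / d). assert (Hh : h > 0) by (apply Rinv_0_lt_compat; auto).
  destruct (conv_facts Ps' Y' G V k b h Hrv Hcdf Hind' HV) as [K1 K2];
    [apply HY0; lra | apply pos_INR | lra |].
  set (K := INR (S k)). assert (HK : K > 0) by (apply lt_0_INR; lia).
  set (a := K * d). assert (Ha : a > 0) by (unfold a; nra).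
  set (Fa := tail (cdf Ps X) a). assert (HFa : Fa > 0) by apply HXu.
  assert (HG : forall u v, u <= v -> G u <= G v).
  { intros u v Huv. unfold G, cdf. apply prob_mono; try apply HY. intros; lra. }
  intros eps Heps.
  set (e1 := eps * G b ^ k * Fa / (2 * K)).
  assert (He1 : e1 > 0) by (unfold e1; apply Rdiv_lt_0_compat; [repeat apply Rmult_lt_0_compat|]; lra).
  destruct (Vlt K e1 He1) as [M1 HM1].
  set (s := h + K * b).
  destruct (Vlt (- s) e1 He1) as [M2 HM2].
  exists (Rmax 1 (d * Rmax M1 M2)). intros x Hx.
  assert (Hx1 : x >= 1) by (pose proof (Rmax_l 1 (d * Rmax M1 M2)); lra).
  set (y := x / d).
  assert (Hy : y >= Rmax M1 M2).
  { pose proof (Rmax_r 1 (d * Rmax M1 M2)). unfold y.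
    apply Rle_ge. apply (Rmult_le_reg_r d); auto. unfold Rdiv. rewrite Rmult_assoc, Rinv_l; lra. }
  pose proof (HM1 y ltac:(pose proof (Rmax_l M1 M2); lra)) as B1.
  pose proof (HM2 y ltac:(pose proof (Rmax_r M1 M2); lra)) as B2.
  replace (y - - s) with (y + s) in B2 by ring.
  pose proof (Vpos y) as Vy.
  apply ratio_bounds in B1; auto. apply ratio_bounds in B2; auto.
  pose proof (K2 y) as K2y. fold K s in K2y.
  pose proof (K1 y) as K1y. fold K in K1y.
  assert (Eyk : y / K = x / a) by (unfold y, a; field; lra).
  rewrite Eyk in K1y.
  pose proof (prod_tail Ps X Y a x HX HY Hind Ha ltac:(lra)) as PT. fold G Fa in PT.
  set (Hb := tail (cdf Ps (fun w => X w * Y w)) x) in *.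
  set (Gt := tail G (x / a)) in *.
  assert (HGt : Gt > 0) by (apply (Rmult_lt_reg_l K); lra).
  assert (HHb : Hb > 0) by nra.
  replace ((x + 1) / d) with (y + h) by (unfold y, h; field; lra).
  fold y. unfold tail at 1 2.
  set (N := G (y + h) - G y).
  assert (HN : N >= 0) by (pose proof (HG y (y + h)); unfold N; lra).
  replace (1 - G y - (1 - G (y + h))) with N by (unfold N; ring).
  rewrite Rabs_pos_eq by (apply Rmult_le_pos; [lra| left; apply Rinv_0_lt_compat; auto]).
  (* N * c < 2 e1 V(y) <= 2 e1 K Gt <= 2 e1 K Hb / Fa *)
  assert (N * G b ^ k < 2 * e1 * K * Hb / Fa).
  { assert (Gt <= Hb / Fa).
    { replace (Hb / Fa) with (Gt + (Hb - Fa * Gt) / Fa) by (field; lra).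
      assert (0 <= (Hb - Fa * Gt) / Fa) by (unfold Rdiv; apply Rmult_le_pos; [lra| left; apply Rinv_0_lt_compat; lra]). lra. }
    assert (2 * e1 * (K * Gt) <= 2 * e1 * K * (Hb / Fa)) by (rewrite <- Rmult_assoc; apply Rmult_le_compat_l; nra).
    fold N in K2y.
    assert (e1 * tail V y <= e1 * (K * Gt)) by (apply Rmult_le_compat_l; lra).
    replace (2 * e1 * K * Hb / Fa) with (2 * e1 * K * (Hb / Fa)) by (field; lra). lra. }
  apply (Rmult_lt_reg_r (G b ^ k)); auto.
  unfold Rdiv. replace (N * / Hb * G b ^ k) with (N * G b ^ k / Hb) by (field; lra).
  apply (Rmult_lt_reg_r Hb); auto.
  replace (N * G b ^ k / Hb * Hb) with (N * G b ^ k) by (field; lra).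
  replace (eps * G b ^ k * Hb) with (2 * e1 * K * Hb / Fa) by (unfold e1; field; lra). auto.
Qed.
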